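(* Let $S$ be a finite set, let $\mathcal{I}\subseteq 2^S$ be a downset of $(2^S,\subseteq)$, and let $T$ be a witnessing tree showing $\mathcal{I}\in\bullet(\{2^X\mid X\subseteq S\})$. Then $\mathrm{mult}_T(2^X)=\hat\mu_{\mathcal{I}}(X)$ for every $X\subseteq S$.
   Context: Here $2^X=\{Y\subseteq S\mid Y\subseteq X\}$ is the principal downset generated by $X$. For $\mathcal{C}\subseteq 2^S$, the generalized Möbius function $\hat\mu_{\mathcal{C}}:2^S\to\mathbb{Z}$ is defined by top-down induction: $\hat\mu_{\mathcal{C}}(X)=[X\in\mathcal{C}]-\sum_{X\subsetneq X'\subseteq S}\hat\mu_{\mathcal{C}}(X')$ (indicator $[X\in\mathcal{C}]\in\{0,1\}$). For sets $A,B$, $A\,\dot\cup\,B=A\cup B$ is defined only when $A\cap B=\emptyset$, and $A\,\dot\setminus\,B=A\setminus B$ is defined only when $B\subseteq A$. For a finite family $\mathcal{G}$ of sets, $\bullet(\mathcal{G})$ is the smallest family containing $\emptyset$ and every member of $\mathcal{G}$ and closed under well-defined disjoint unions and subset complements. A witnessing tree of $X\in\bullet(\mathcal{G})$ is a rooted ordered tree whose leaves are labelled by $\emptyset$ or members of $\mathcal{G}$ and whose internal nodes are labelled $\dot\cup$ or $\dot\setminus$ ($\dot\setminus$-nodes binary), such that evaluating internal nodes as the corresponding operations on their children's values is always well defined and the root evaluates to $X$. The polarity of a leaf $\ell$ is $1$ if the root-to-$\ell$ path goes to the right child of a $\dot\setminus$-node an even number of times and $-1$ otherwise; $\mathrm{mult}_T(U)$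 is the sum of the polarities of the leaves of $T$ labelled $U$ (so it is $0$ if no leaf is labelled $U$). *)

(* Defs.v *)
From mathcomp Require Import all_boot all_order all_algebra.
Set Implicit Arguments. Unset Strict Implicit. Unset Printing Implicit Defensive.
Import GRing.Theory.
Local Open Scope ring_scope.

Section Defs.
Variable T : finType.
Notation fam := {set {set T}}.

Definition pdown (X : {set T}) : fam := powerset X.

(* Generalized Moebius function, top-down induction; [fuel] bounds the number
   of further proper-superset steps; #|~: X| steps always suffice. *)
Fixpoint gmu_aux (C : fam) (n : nat) (X : {set T}) : int :=
  (X \in C)%:Z -
  (if n is m.+1 then \sum_(Y : {set T} | X \proper Y) gmu_aux C m Y else 0).
Definition gmu (C : fam) (X : {set T}) : int := gmu_aux C #|~: X| X.

Definition downset (C : fam) : Prop :=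
  forall A B : {set T}, B \subset A -> A \in C -> B \in C.

(* Rooted ordered trees: leaves labelled by families, internal nodes
   disjoint union (any arity, ordered children) or subset complement (binary). *)
Inductive wtree :=
| WLeaf of fam
| WUnion of seq wtree
| WDiff of wtree & wtree.

Fixpoint weval (t : wtree) : option fam :=
  match t with
  | WLeaf U => Some U
  | WUnion ts =>
      (fix go (ts : seq wtree) : option fam :=
         match ts with
         | [::] => Some set0
         | t1 :: ts' =>
             match weval t1, go ts' with
             | Some A, Some B => if [disjoint A & B] then Some (A :|: B) else None
             | _, _ => None
             end
         end) ts
  | WDiff l r =>
      match weval l, weval r with
      | Some A, Some B => if B \subset A then Some (A :\: B) else None
      | _, _ => None
      end
  end.

(* leaves with label and parity of number of right-child-of-\setminus steps *)
Fixpoint wleaves (t : wtree) : seq (fam * bool) :=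
  match t with
  | WLeaf U => [:: (U, false)]
  | WUnion ts =>
      (fix go (ts : seq wtree) : seq (fam * bool) :=
         match ts with
         | [::] => [::]
         | t1 :: ts' => wleaves t1 ++ go ts'
         end) ts
  | WDiff l r => wleaves l ++ [seq (p.1, ~~ p.2) | p <- wleaves r]
  end.

Definition polarity (b : bool) : int := if b then -1 else 1.

Definition mult (t : wtree) (U : fam) : int :=
  \sum_(p <- wleaves t | p.1 == U) polarity p.2.

Definition leaves_in (G : {set fam}) (t : wtree) : bool :=
  all (fun p : fam * bool => (p.1 == set0) || (p.1 \in G)) (wleaves t).

Definition witnessing (G : {set fam}) (t : wtree) (X : fam) : Prop :=
  leaves_in G t /\ weval t = Some X.

Definition principal_downsets : {set fam} := [set pdown X | X : {set T}].

End Defs.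

(* Main.v *)
Require Import Defs.
From mathcomp Require Import all_boot all_order all_algebra.
Set Implicit Arguments. Unset Strict Implicit. Unset Printing Implicit Defensive.
Import GRing.Theory.
Local Open Scope ring_scope.

Section Proof.
Variable T : finType.
Implicit Types (C : {set {set T}}) (X Y : {set T}).

Lemma card_proper_lt X Y : X \proper Y -> (#|~: Y| < #|~: X|)%N.
Proof. by move=> H; apply: proper_card; rewrite properC. Qed.

Lemma gmu_aux_fuel C n k X : (#|~: X| <= n)%N -> (#|~: X| <= k)%N ->
  gmu_aux C n X = gmu_aux C k X.
Proof.
elim: n k X => [|n IH] k X Hn Hk.
  case: k Hk => [|k] Hk //=; congr (_ - _).
  rewrite big_pred0 // => Y; apply/negP => /card_proper_lt; rewrite leqn0 in Hn.
  by rewrite (eqP Hn).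
case: k Hk => [|k] Hk /=.
  congr (_ - _).
  rewrite big_pred0 // => Y; apply/negP => /card_proper_lt; rewrite leqn0 in Hk.
  by rewrite (eqP Hk).
congr (_ - _); apply: eq_bigr => Y /card_proper_lt HY.
by apply: IH; rewrite -ltnS; apply: leq_trans HY _.
Qed.

Lemma gmu_rec C X : gmu C X = (X \in C)%:Z - \sum_(Y : {set T} | X \proper Y) gmu C Y.
Proof.
rewrite /gmu; case E: #|~: X| => [|m] /=.
  congr (_ - _); rewrite big_pred0 // => Y; apply/negP => /card_proper_lt.
  by rewrite E.
congr (_ - _); apply: eq_bigr => Y /card_proper_lt HY.
by apply: gmu_aux_fuel => //; rewrite -ltnS -E.
Qed.

Lemma gmu_sum C X : (X \in C)%:Z = \sum_(Y : {set T} | X \subset Y) gmu C Y.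
Proof.
rewrite (bigD1 X) //= gmu_rec.
have -> : \sum_(i : {set T} | (X \subset i) && (i != X)) gmu C i = \sum_(Y : {set T} | X \proper Y) gmu C Y.
  apply: eq_bigl => Y; rewrite properEneq andbC; congr (_ && _).
  by rewrite eq_sym.
by rewrite subrK.
Qed.

Lemma gmu_unique C (f : {set T} -> int) :
  (forall X, (X \in C)%:Z = \sum_(Y : {set T} | X \subset Y) f Y) -> forall X, f X = gmu C X.
Proof.
move=> Hf X; move: {2}#|~: X| (leqnn #|~: X|) => n; elim: n X => [|n IH] X Hn.
  have HX : forall Y, X \proper Y = false.
    by move=> Y; apply/negP => /card_proper_lt; rewrite leqn0 in Hn; rewrite (eqP Hn).
  have := Hf X; rewrite gmu_rec (bigD1 X) //= big_pred0; last first.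
    by move=> Y; rewrite -(HX Y) properEneq andbC eq_sym.
  rewrite big_pred0 // addr0 => ->; by rewrite subr0.
have := Hf X; rewrite gmu_rec (bigD1 X) //=.
have -> : \sum_(i : {set T} | (X \subset i) && (i != X)) f i = \sum_(Y : {set T} | X \proper Y) gmu C Y.
  rewrite (eq_bigl (fun Y => X \proper Y)); last first.
    by move=> Y; rewrite properEneq andbC eq_sym.
  apply: eq_bigr => Y /card_proper_lt HY; apply: IH.
  by rewrite -ltnS; apply: leq_trans HY _.
by move=> ->; rewrite addrK.
Qed.

Definition wtree_ind' (P : wtree T -> Prop)
  (HL : forall U, P (WLeaf U))
  (HU : forall ts, foldr (fun t acc => P t /\ acc) True ts -> P (WUnion ts))
  (HD : forall l r, P l -> P r -> P (WDiff l r)) : forall t, P t :=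
  fix F t := match t with
  | WLeaf U => HL U
  | WUnion ts => HU ts ((fix G ts : foldr (fun t acc => P t /\ acc) True ts :=
        match ts with [::] => I | t1 :: ts' => conj (F t1) (G ts') end) ts)
  | WDiff l r => HD l r (F l) (F r)
  end.

Lemma weval_cons (t1 : wtree T) (ts : seq (wtree T)) : weval (WUnion (t1 :: ts)) =
  match weval t1, weval (WUnion ts) with
  | Some A, Some B => if [disjoint A & B] then Some (A :|: B) else None
  | _, _ => None end :> option {set {set T}}.
Proof. by []. Qed.

Lemma wleaves_cons (t1 : wtree T) (ts : seq (wtree T)) : wleaves (WUnion (t1 :: ts)) = wleaves t1 ++ wleaves (WUnion ts).
Proof. by []. Qed.

Definition lsum (s : seq ({set {set T}} * bool)) Y : int :=
  \sum_(p <- s) polarity p.2 * (Y \in p.1)%:Z.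

Lemma weval_lin t : forall F, weval t = Some F ->
  forall Y, (Y \in F)%:Z = lsum (wleaves t) Y.
Proof.
elim/wtree_ind': t => [U|ts IH|l r IHl IHr] F.
- by case=> <- Y; rewrite /lsum big_seq1 /= mul1r.
- elim: ts IH F => [|t1 ts IHts] IH F.
    by case=> <- Y; rewrite /lsum big_nil inE.
  case: IH => H1 Hts; rewrite weval_cons wleaves_cons.
  case E1: (weval t1) => [A|] //; case E2: (weval (WUnion ts)) => [B|] //.
  case: ifP => // Hd [<-] Y.
  rewrite /lsum big_cat -/(lsum (wleaves t1) Y) -/(lsum (wleaves (WUnion ts)) Y) -(IHts Hts B E2 Y) -(H1 A E1 Y) inE.
  case HA: (Y \in A); case HB: (Y \in B) => //.
  by rewrite (disjointFr Hd HA) in HB.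
- rewrite /=; case E1: (weval l) => [A|] //; case E2: (weval r) => [B|] //.
  case: ifP => // Hs [<-] Y.
  rewrite /lsum big_cat big_map /= -/(lsum _ Y) -(IHl A E1 Y).
  have -> : \sum_(j <- wleaves r) polarity (~~ j.2) * (Y \in j.1)%:Z = - lsum (wleaves r) Y.
    rewrite /lsum -sumrN; apply: eq_bigr => p _; by case: p.2; rewrite /= ?mulN1r ?mul1r ?opprK.
  rewrite -(IHr B E2 Y) inE.
  case HA: (Y \in A); case HB: (Y \in B) => //=.
  by move: Hs => /subsetP /(_ Y HB); rewrite HA.
Qed.

Lemma pdown_inj : injective (@pdown T).
Proof.
move=> X1 X2 E; apply/eqP; rewrite eqEsubset.
have h1 : X1 \in pdown X2 by rewrite -E /pdown powersetE.
have h2 : X2 \in pdown X1 by rewrite E /pdown powersetE.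
by rewrite /pdown !powersetE in h1 h2; rewrite h1 h2.
Qed.

Lemma pdown_neq0 X : pdown X != set0.
Proof. by apply/set0Pn; exists set0; rewrite /pdown powersetE sub0set. Qed.

End Proof.

Theorem proposition5p8 (T : finType) (I : {set {set T}}) (t : wtree T) :
  downset I ->
  witnessing (principal_downsets T) t I ->
  forall X : {set T}, mult t (pdown X) = gmu I X.
Proof.
move=> _ [Hl He]; apply: gmu_unique => Y.
rewrite (weval_lin He) /lsum.
have step : forall p, p \in wleaves t -> polarity p.2 * (Y \in p.1)%:Z =
    \sum_(X : {set T} | Y \subset X) ((p.1 == pdown X)%:Z * polarity p.2).
  move=> p /(allP Hl) /orP [/eqP->|].
    rewrite inE mulr0 big1 // => X _.
    by rewrite eq_sym (negbTE (pdown_neq0 X)) mul0r.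
  case/imsetP => X0 _ ->.
  rewrite (eq_bigr (fun X => if X == X0 then polarity p.2 else 0)); last first.
    by move=> X _; rewrite (inj_eq (@pdown_inj T)) eq_sym; case: (X == X0); rewrite /= ?mul1r ?mul0r.
  rewrite -big_mkcondr /= /pdown powersetE.
  case HY: (Y \subset X0).
    rewrite (eq_bigl (pred1 X0)) ?big_pred1_eq ?mulr1 // => X /=.
    by case: eqP => [->|]; rewrite ?HY ?andbF ?andbT.
  rewrite mulr0 big_pred0 // => X; case: eqP => [->|]; by rewrite ?HY ?andbF.
rewrite (eq_big_seq _ step) exchange_big /=.
apply: eq_bigr => X _; rewrite /mult [RHS]big_mkcond /=.
by apply: eq_bigr => p _; case: (p.1 == pdown X); rewrite /= ?mul1r ?mul0r.
Qed.
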